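(* Let $R$ be a $d\times d$ expansive integer matrix, $B\subset\mathbb{Z}^d$ finite with $0\in B$, $N:=|B|$, $L\subset\mathbb{Z}^d$ finite with $0\in L$, and $(\alpha_l)_{l\in L}$ complex numbers such that the matrix $\frac{1}{\sqrt N}\left(e^{2\pi i (R^T)^{-1}l\cdot b}\alpha_l\right)_{l\in L,b\in B}$ has orthonormal columns (equivalently, $\sum_{l\in L}|\alpha_l|^2|m_B((R^T)^{-1}(t-l))|^2=1$ for all $t\in\mathbb{R}^d$). Then for every $k\in\mathbb{N}$ the functions $$\left\{\alpha_{l_0}\cdots\alpha_{l_{k-1}}\,e_{l_0+R^Tl_1+\dots+(R^T)^{k-1}l_{k-1}} : l_0,\dots,l_{k-1}\in L\right\}$$ form a Parseval frame for $L^2(\nu_k)$, where $\nu_k=\frac{1}{N^k}\sum_{b_0,\dots,b_{k-1}\in B}\delta_{R^{-k}(b_0+Rb_1+\dots+R^{k-1}b_{k-1})}$.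
   Context: $e_\lambda(x)=e^{2\pi i\lambda\cdot x}$, $m_B(x)=\frac1N\sum_{b\in B}e^{2\pi ib\cdot x}$, $\delta_a$ is the Dirac measure at $a$. A Parseval frame $\{f_i\}$ of $H$ satisfies $\sum_i|\langle v,f_i\rangle|^2=\|v\|^2$ for all $v\in H$. A matrix is expansive if all eigenvalues have modulus $>1$. *)

(* Defs.v *)
From HB Require Import structures.
From mathcomp Require Import all_boot all_order all_algebra.
From mathcomp Require Import finmap.
From mathcomp Require Import all_classical all_reals all_analysis.
From mathcomp Require Import complex.
Set Implicit Arguments. Unset Strict Implicit. Unset Printing Implicit Defensive.
Import Order.TTheory GRing.Theory Num.Theory.
Local Open Scope ring_scope.
Local Open Scope complex_scope.

Definition intmx (R : realType) (m n : nat) (A : 'M[int]_(m, n)) : 'M[R]_(m, n) :=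
  map_mx (fun z : int => z%:~R) A.

Definition dotr (R : realType) (d : nat) (x y : 'cV[R]_d) : R := (x^T *m y) 0 0.

Definition expi (R : realType) (t : R) : R[i] :=
  (cos (2 * pi * t)) +i* (sin (2 * pi * t)).

Definition expansive (R : realType) (d : nat) (M : 'M[int]_d) : Prop :=
  forall z : R[i], eigenvalue (map_mx (fun w : int => (w%:~R : R)%:C) M) z -> 1 < `|z|.

Definition radix_sum (d k : nat) (A : 'M[int]_d) (v : 'I_k -> 'cV[int]_d)
  : 'cV[int]_d := \sum_(j < k) iter j (mulmx A) (v j).

Definition nu_atom (R : realType) (d k : nat) (M : 'M[int]_d) (v : 'I_k -> 'cV[int]_d)
  : 'cV[R]_d := iter k (mulmx (invmx (intmx R M))) (intmx R (radix_sum M v)).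

(* Inner product of L^2(nu_k), nu_k = N^-k sum_{b in B^k} delta_{nu_atom b}. *)
Definition nu_inner (R : realType) (d k : nat) (M : 'M[int]_d) (B : {fset 'cV[int]_d})
  (f g : 'cV[R]_d -> R[i]) : R[i] :=
  ((#|` B|%:R : R[i]) ^+ k)^-1 *
  \sum_(bs : k.-tuple B)
     f (nu_atom R M (fun j => val (tnth bs j))) *
     (g (nu_atom R M (fun j => val (tnth bs j))))^*.

Definition frame_fun (R : realType) (d k : nat) (M : 'M[int]_d) (L : {fset 'cV[int]_d})
  (alpha : L -> R[i]) (ls : k.-tuple L) : 'cV[R]_d -> R[i] :=
  fun x => (\prod_(j < k) alpha (tnth ls j)) *
           expi (dotr (intmx R (radix_sum M^T (fun j => val (tnth ls j)))) x).

(* Main.v *)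
Require Import Defs.
From HB Require Import structures.
From mathcomp Require Import all_boot all_order all_algebra.
From mathcomp Require Import finmap.
From mathcomp Require Import all_classical all_reals all_analysis.
From mathcomp Require Import complex.
From mathcomp Require Import ring.

Import Order.TTheory GRing.Theory Num.Theory.
Local Open Scope ring_scope.
Local Open Scope complex_scope.
Set Implicit Arguments. Unset Strict Implicit. Unset Printing Implicit Defensive.
Section E.
Variable R : realType.

Lemma expiD (a b : R) : expi (a + b) = expi a * expi b.
Proof.
rewrite /expi mulrDr cosD sinD.
by rewrite -[(_ +i* _) * (_ +i* _)]/(_ +i* _); congr Complex; rewrite addrC.
Qed.

Lemma expi_nat (n : nat) : expi (n%:R : R) = 1.
Proof.
have h : 2 * pi * (n%:R : R) = 0 + (pi *+ 2) *+ n.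
  by rewrite add0r -[RHS]mulr_natr -(mulr_natr pi 2) [pi * _]mulrC.
rewrite /expi h (periodicn (@cosD2pi R)) (periodicn (@sinD2pi R)) cos0 sin0.
by [].
Qed.

Lemma expiN (a : R) : expi (- a) = (expi a)^*.
Proof. by rewrite /expi mulrN cosN sinN. Qed.

Lemma expi_int (z : int) : expi (z%:~R : R) = 1.
Proof.
case: z => n; first by rewrite -pmulrn expi_nat.
by rewrite NegzE mulrNz expiN -pmulrn expi_nat conjc1.
Qed.

Lemma expiJ (a : R) : expi a * (expi a)^* = 1.
Proof.
rewrite /expi /= -[(_ +i* _) * (_ +i* _)]/(_ +i* _).
by congr Complex; rewrite ?mulrN ?opprK -?expr2 ?cos2Dsin2 // mulrC addNr.
Qed.
End E.
Section U.
Variable R : realType.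
Lemma detint (F : pzRingType) d (M : 'M[int]_d) :
  \det (map_mx (fun z : int => (z%:~R : F)) M) = (\det M)%:~R.
Proof. by rewrite -[RHS](det_map_mx (intr : int -> F)). Qed.

Lemma intmx_unit d (M : 'M[int]_d) : expansive R M -> intmx R M \in unitmx.
Proof.
move=> hM; rewrite unitmxE unitfE /intmx detint intr_eq0.
apply/negP => /eqP h0.
have : \det (map_mx (fun w : int => (w%:~R : R)%:C) M) == 0.
  have -> : map_mx (fun w : int => (w%:~R : R)%:C) M = map_mx (fun w : int => (w%:~R : R[i])) M.
    by apply/matrixP => i j; rewrite !mxE rmorph_int.
  by rewrite detint h0.
move/det0P => [v vn0 hv].
have : eigenvalue (map_mx (fun w : int => (w%:~R : R)%:C) M) 0.
  by apply/eigenvalueP; exists v => //; rewrite hv scale0r.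
by move/hM; rewrite normr0 ltr10.
Qed.
End U.
Section Main.
Variables (R : realType) (d : nat) (M : 'M[int]_d) (B L : {fset 'cV[int]_d}).
Variable alpha : L -> R[i].
Hypothesis hU : intmx R M \in unitmx.
Local Notation Mr := (intmx R M).
Local Notation Qr := (invmx (intmx R M)).

Lemma dotrDr (u v w : 'cV[R]_d) : dotr u (v + w) = dotr u v + dotr u w.
Proof. by rewrite /dotr mulmxDr mxE. Qed.
Lemma dotrDl (u v w : 'cV[R]_d) : dotr (u + v) w = dotr u w + dotr v w.
Proof. by rewrite /dotr linearD mulmxDl mxE. Qed.
Lemma intmxD m n (u v : 'M[int]_(m,n)) : intmx R (u + v) = intmx R u + intmx R v.
Proof. exact: (map_mxD intr). Qed.
Lemma intmxM m n p (u : 'M[int]_(m,n)) (v : 'M[int]_(n,p)) :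
  intmx R (u *m v) = intmx R u *m intmx R v.
Proof. exact: (map_mxM intr). Qed.
Lemma intmxT m n (u : 'M[int]_(m,n)) : intmx R u^T = (intmx R u)^T.
Proof. by rewrite /intmx map_trmx. Qed.
Lemma intmx_iter k (v : 'cV[int]_d) : intmx R (iter k (mulmx M) v) = iter k (mulmx Mr) (intmx R v).
Proof. by elim: k => //= k IH; rewrite intmxM IH. Qed.
Lemma iterD k (X : 'M[R]_d) (u v : 'cV[R]_d) : iter k (mulmx X) (u + v) = iter k (mulmx X) u + iter k (mulmx X) v.
Proof. by elim: k => //= k IH; rewrite IH mulmxDr. Qed.
Lemma iterK k (v : 'cV[R]_d) : iter k (mulmx Qr) (iter k (mulmx Mr) v) = v.
Proof.
elim: k => // k IH.
by rewrite iterSr [iter k.+1 _ _]/= (mulKmx hU) IH.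
Qed.

Definition lam k (ls : k.-tuple L) : 'cV[int]_d := radix_sum M^T (fun j => val (tnth ls j)).
Definition atom k (bs : k.-tuple B) : 'cV[R]_d := nu_atom R M (fun j => val (tnth bs j)).
Definition G k (ls : k.-tuple L) (bs : k.-tuple B) : R[i] :=
  (\prod_(j < k) alpha (tnth ls j)) * expi (dotr (intmx R (lam ls)) (atom bs)).

Lemma lam_cons k (l : L) (ls : k.-tuple L) : lam (cons_tuple l ls) = val l + M^T *m lam ls.
Proof.
rewrite /lam /radix_sum big_ord_recl /= mulmx_sumr; congr (_ + _).
by apply: eq_bigr => i _; rewrite tnthS.
Qed.

Lemma tnth_rcons_w k T (bs : k.-tuple T) b (j : 'I_k) :
  tnth (rcons_tuple bs b) (widen_ord (leqnSn k) j) = tnth bs j.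
Proof.
by rewrite (tnth_nth b) /= nth_rcons size_tuple ltn_ord -tnth_nth.
Qed.
Lemma tnth_rcons_m k T (bs : k.-tuple T) b :
  tnth (rcons_tuple bs b) ord_max = b.
Proof.
by rewrite (tnth_nth b) /= nth_rcons size_tuple ltnn eqxx.
Qed.

Lemma atom_rcons k (bs : k.-tuple B) (b : B) :
  atom (rcons_tuple bs b) = Qr *m (atom bs + intmx R (val b)).
Proof.
rewrite /atom /nu_atom /radix_sum big_ord_recr /= intmxD iterD intmx_iter iterK.
rewrite tnth_rcons_m; congr (_ *m (_ + _)); congr (iter _ _ (intmx R _)).
by apply: eq_bigr => i _; rewrite tnth_rcons_w.
Qed.

Lemma phase_step (u w c : 'cV[int]_d) (x : 'cV[R]_d) :
  dotr (intmx R (u + M^T *m w)) (Qr *m (x + intmx R c)) =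
  dotr (intmx R u) (Qr *m (x + intmx R c)) + dotr (intmx R w) x + ((w^T *m c) 0 0)%:~R.
Proof.
rewrite intmxD dotrDl -addrA; congr (_ + _).
rewrite {1}/dotr intmxM intmxT trmx_mul trmxK -mulmxA (mulmxA Mr) (mulmxV hU) mul1mx.
rewrite mulmxDr mxE; congr (_ + _).
by rewrite -intmxT -intmxM mxE.
Qed.

Lemma G_step k (l : L) (ls : k.-tuple L) (bs : k.-tuple B) (b : B) :
  G (cons_tuple l ls) (rcons_tuple bs b) =
  alpha l * expi (dotr (intmx R (val l)) (Qr *m (atom bs + intmx R (val b)))) * G ls bs.
Proof.
rewrite /G big_ord_recl lam_cons atom_rcons phase_step !expiD expi_int mulr1.
have -> : \prod_(i < k) alpha (tnth (cons_tuple l ls) (lift ord0 i)) = \prod_(i < k) alpha (tnth ls i).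
  by apply: eq_bigr => i _; rewrite tnthS.
rewrite [tnth _ ord0]/=.
set P := \prod_(_ < _) _; set e1 := expi _; set e2 := expi _.
by rewrite -!mulrA; congr (_ * _); rewrite mulrCA.
Qed.
End Main.
Section Tup.
Variable R : realType.
Lemma sum_cons (T : finType) k (F : k.+1.-tuple T -> R[i]) :
  \sum_t F t = \sum_x \sum_(t : k.-tuple T) F (cons_tuple x t).
Proof.
rewrite pair_big /= (reindex (fun p : T * k.-tuple T => cons_tuple p.1 p.2)) //=.
exists (fun t => (thead t, behead_tuple t)) => [[x t] _ | t _] /=.
  by congr pair; apply: val_inj.
by apply: val_inj => /=; case/tupleP: t.
Qed.

Lemma tuple_rconsP k (T : Type) (t : k.+1.-tuple T) : exists bs b, t = rcons_tuple bs b.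
Proof.
case/tupleP: t => x s.
have hs : size (belast x s) == k by rewrite size_belast size_tuple.
exists (Tuple hs), (last x s); apply: val_inj => /=; exact: lastI.
Qed.

Lemma helperJ (a c e e' : R[i]) : c * c^* = 1 ->
  a * (c * e) * (a * (c * e'))^* = a * a^* * e * e'^*.
Proof.
move=> hc; rewrite !rmorphM -[RHS]mulr1 -hc; ring.
Qed.
End Tup.
Section Main2.
Variables (R : realType) (d : nat) (M : 'M[int]_d) (B L : {fset 'cV[int]_d}).
Variable alpha : L -> R[i].
Hypothesis hU : intmx R M \in unitmx.
Local Notation Qr := (invmx (intmx R M)).
Local Notation E l b := (expi (dotr (intmx R (val l)) (Qr *m intmx R (val b)))).
Local Notation N := (#|` B|%:R : R[i]).

Hypothesis H : forall b b' : B,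
  \sum_(l : L) alpha l * (alpha l)^* * E l b * (E l b')^* = N * (b == b')%:R.

Lemma ortho k (bs bs' : k.-tuple B) :
  \sum_(ls : k.-tuple L) G M alpha ls bs * (G M alpha ls bs')^* = N ^+ k * (bs == bs')%:R.
Proof.
elim: k bs bs' => [|k IH] bs bs'.
  rewrite (tuple0 bs) (tuple0 bs') eqxx expr0 mulr1.
  rewrite (eq_bigr (fun _ => 1)) ?sumr_const ?card_tuple ?expn0 //.
  by move=> ls _; rewrite /G big_ord0 !mul1r expiJ.
move: (tuple_rconsP bs) (tuple_rconsP bs') => [b0s [b ->]] [b0s' [b' ->]].
rewrite sum_cons.
under eq_bigr => l _ do under eq_bigr => ls _ do
  rewrite !(G_step _ hU) rmorphM mulrACA.
under eq_bigr => l _ do rewrite -mulr_sumr IH.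
rewrite -mulr_suml.
have -> : (rcons_tuple b0s b == rcons_tuple b0s' b') = (b0s == b0s') && (b == b').
  by rewrite -val_eqE /= eqseq_rcons val_eqE.
case: (eqVneq b0s b0s') => [<-|ne]; last by rewrite !mulr0.
rewrite mulr1 /=.
under eq_bigr => l _ do rewrite !mulmxDr !dotrDr !expiD helperJ ?expiJ //.
by rewrite H exprS mulrAC.
Qed.
End Main2.
Lemma scal (R : realType) (s : R) (a e e' : R[i]) :
  s%:C * e * a * (s%:C * e' * a)^* = (s * s)%:C * (a * a^* * e * e'^*).
Proof.
have cr : conjc (s%:C) = s%:C :> R[i] by exact: conjc_real.
have cjM : forall x y : R[i], conjc (x * y) = conjc x * conjc y by move=> x y; exact: rmorphM.
have NC : forall x : R[i], Num.conj x = conjc x by [].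
have sM : (s * s)%:C = s%:C * s%:C :> R[i] by exact: rmorphM.
by rewrite ?NC !cjM cr sM; ring.
Qed.

Theorem proposition3p7 (R : realType) (d : nat) (M : 'M[int]_d)
  (B L : {fset 'cV[int]_d}) (alpha : L -> R[i]) :
  expansive R M ->
  (0 : 'cV[int]_d) \in B ->
  (0 : 'cV[int]_d) \in L ->
  (forall b b' : B,
     \sum_(l : L)
       ((Num.sqrt (#|` B|%:R : R))^-1)%:C
         * expi (dotr (invmx (intmx R M^T) *m intmx R (val l)) (intmx R (val b)))
         * alpha l
       * (((Num.sqrt (#|` B|%:R : R))^-1)%:C
         * expi (dotr (invmx (intmx R M^T) *m intmx R (val l)) (intmx R (val b')))
         * alpha l)^*
     = (b == b')%:R) ->
  forall (k : nat) (f : 'cV[R]_d -> R[i]),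
    \sum_(ls : k.-tuple L) `| nu_inner k M B f (frame_fun M alpha ls) | ^+ 2
    = nu_inner k M B f f.
Proof.
move=> hexp hB hL hyp k f.
have hU := intmx_unit hexp.
have Npos : (0 < #|` B|)%N by rewrite cardfs_gt0; apply/fset0Pn; exists 0.
have N0 : (#|` B|%:R : R[i]) != 0 by rewrite pnatr_eq0 -lt0n.
have th : forall (l : L) (b : B),
    dotr (invmx (intmx R M^T) *m intmx R (val l)) (intmx R (val b)) =
    dotr (intmx R (val l)) (invmx (intmx R M) *m intmx R (val b)).
  move=> l b; rewrite /dotr trmx_mul -mulmxA intmxT -trmx_inv trmxK //.
have H : forall b b' : B,
  \sum_(l : L) alpha l * (alpha l)^* *
     expi (dotr (intmx R (val l)) (invmx (intmx R M) *m intmx R (val b))) *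
     (expi (dotr (intmx R (val l)) (invmx (intmx R M) *m intmx R (val b'))))^*
  = (#|` B|%:R : R[i]) * (b == b')%:R.
  move=> b b'.
  set s := ((Num.sqrt (#|` B|%:R : R))^-1).
  have ss : (#|` B|%:R : R[i]) * (s * s)%:C = 1.
    rewrite -expr2 /s exprVn sqr_sqrtr ?ler0n //.
    by rewrite fmorphV /= rmorph_nat mulfV.
  have := hyp b b'.
  rewrite (eq_bigr (fun l : L => (s * s)%:C * (alpha l * (alpha l)^* *
     expi (dotr (intmx R (val l)) (invmx (intmx R M) *m intmx R (val b))) *
     (expi (dotr (intmx R (val l)) (invmx (intmx R M) *m intmx R (val b'))))^*))); last first.
    by move=> l _; rewrite !th; exact: scal.
  by rewrite -mulr_sumr => <-; rewrite mulrA ss mul1r.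
set c := ((#|` B|%:R : R[i]) ^+ k)^-1.
have e1 : forall ls : k.-tuple L, nu_inner k M B f (frame_fun M alpha ls) =
   c * \sum_(bs : k.-tuple B) f (atom R M bs) * conjc (G M alpha ls bs) by [].
have e2 : nu_inner k M B f f =
   c * \sum_(bs : k.-tuple B) f (atom R M bs) * conjc (f (atom R M bs)) by [].
rewrite e2.
have cjM : forall x y : R[i], conjc (x * y) = conjc x * conjc y by move=> x y; exact: rmorphM.
have cjK : forall x : R[i], conjc (conjc x) = x by exact: conjcK.
have cjS : forall (F : k.-tuple B -> R[i]), conjc (\sum_i F i) = \sum_i conjc (F i).
  by move=> F; exact: rmorph_sum.
have cjc : conjc c = c.
  rewrite /c.
  have -> : conjc (((#|` B|%:R : R[i]) ^+ k)^-1) = (conjc ((#|` B|%:R : R[i]) ^+ k))^-1 by exact: fmorphV.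
  by rewrite -natrX conjc_nat.
under eq_bigr => ls _ do rewrite e1 sqr_normc cjM cjc cjS mulrACA.
rewrite -mulr_sumr.
under eq_bigr => ls _ do rewrite mulr_suml.
under eq_bigr => ls _ do under eq_bigr => bs _ do rewrite mulr_sumr.
rewrite exchange_big /=.
under eq_bigr => bs _ do rewrite exchange_big /=.
under eq_bigr => bs _ do under eq_bigr => bs' _ do under eq_bigr => ls _ do
  rewrite [conjc (f _ * _)]cjM cjK mulrACA [conjc (G _ _ _ _) * _]mulrC.
under eq_bigr => bs _ do under eq_bigr => bs' _ do rewrite -mulr_sumr (ortho hU H).
have d1 : forall (F : k.-tuple B -> R[i]) (bs : k.-tuple B),
    \sum_(bs' : k.-tuple B) F bs' * ((#|` B|%:R : R[i]) ^+ k * (bs' == bs)%:R) = F bs * (#|` B|%:R : R[i]) ^+ k.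
  move=> F bs; rewrite (bigD1 bs) //= eqxx mulr1 big1 ?addr0 //.
  by move=> bs' /negbTE ->; rewrite !mulr0.
under eq_bigr => bs _ do rewrite d1.
have cN : c * (#|` B|%:R : R[i]) ^+ k = 1 by rewrite /c mulVf // expf_neq0.
by rewrite -mulr_suml (mulrC _ (_ ^+ k)) mulrA -(mulrA c) cN mulr1.
Qed.
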